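(* Consider the repeated single-slot hybrid auction in which at each step $t$ each advertiser $j$ bids $(m_{jt},c_{jt})$, the auctioneer's index is $q_{jt}>0$, the effective bid is $R_{jt}=\max(m_{jt},c_{jt}q_{jt})$, the highest effective bid wins and pays (with $R_{-j}$ the highest competing effective bid) $R_{-j}$ per impression if $m_{jt}>c_{jt}q_{jt}$ and $R_{-j}/q_{jt}$ per click otherwise. Advertiser $j$ has per-click value $v_j$ and is certain of its click-through rate $p_j>0$ (its prior is the point mass at $p_j$). The bidding index strategy (with advertiser discount factor $\gamma_b\in[0,1)$) bids at each step $(B_{jt},B_{jt}/p_j)$, where $B_{jt}=\mathcal{W}_{jt}\min(1,p_j/q_{jt})$ and $\mathcal{W}_{jt}$ is the largest $W$ such that the following game has positive optimal expected $\gamma_b$-discounted value: starting at step $t$, at each step $s\ge t$ the advertiser may stop or continue, and if it continues it gains $v_jp_j-W\min(1,p_j/q_{js})$. Then: (1) if $q_{jt}\le p_j$ for all $t$, the bidding index strategy reduces to bidding $(v_jp_j,v_j)$; this is equivalent to bidding $(v_jp_j,0)$ and is socially optimal (i.e. the impression goes to an advertiser with the largest $v_jp_j$); (2) if $q_{jt}\ge p_j$ for all $t$ and $q_{jt}$ is monotonically decreasing in $t$, the bidding index strategy reduces to bidding $(v_jp_j,v_j)$.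
   Context: ''Equivalent'' bids are bids yielding the same effective bid and the same pricing. *)

(* Defs.v *)
From Stdlib Require Import Reals Lra.
From Coquelicot Require Import Coquelicot.
Open Scope R_scope.

(** A bid is a pair (m, c): per-impression bid m, per-click bid c. *)
Definition bid := (R * R)%type.

Definition eff_bid (q : R) (b : bid) : R := Rmax (fst b) (snd b * q).

Inductive pricing := PerImpression (price : R) | PerClick (price : R).

Definition price_rule (q : R) (b : bid) (Rm : R) : pricing :=
  if Rlt_dec (snd b * q) (fst b) then PerImpression Rm else PerClick (Rm / q).

(** Expected charge for one impression of an advertiser with click-through
    rate p (per-click prices are paid with probability p). *)
Definition expected_charge (p : R) (pr : pricing) : R :=
  match pr with PerImpression r => r | PerClick r => p * r end.

Definition equivalent_bids (p q : R) (b1 b2 : bid) : Prop :=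
  eff_bid q b1 = eff_bid q b2 /\
  forall Rm : R, expected_charge p (price_rule q b1 Rm)
               = expected_charge p (price_rule q b2 Rm).

Definition gain (v p W : R) (q : nat -> R) (s : nat) : R :=
  v * p - W * Rmin 1 (p / q s).

Fixpoint psum (f : nat -> R) (N : nat) : R :=
  match N with O => 0 | S n => psum f n + f n end.

(** Deterministic stopping policies (the game is deterministic since the
    prior is a point mass): [Some N] = continue for N steps t,...,t+N-1 then
    stop; [None] = never stop. *)
Definition policy_value (g : nat -> R) (gam : R) (t : nat) (pol : option nat) : R :=
  match pol with
  | Some N => psum (fun k => gam ^ k * g (t + k)%nat) N
  | None => Series (fun k => gam ^ k * g (t + k)%nat)
  end.

Definition optimal_value_positive (v p : R) (q : nat -> R) (gam : R) (t : nat) (W : R) : Prop :=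
  Rbar_lt 0 (Lub_Rbar (fun x => exists pol, x = policy_value (gain v p W q) gam t pol)).

Definition index_W (v p : R) (q : nat -> R) (gam : R) (t : nat) : R :=
  real (Lub_Rbar (fun W => optimal_value_positive v p q gam t W)).

Definition index_B (v p : R) (q : nat -> R) (gam : R) (t : nat) : R :=
  index_W v p q gam t * Rmin 1 (p / q t).

Definition index_bid (v p : R) (q : nat -> R) (gam : R) (t : nat) : bid :=
  (index_B v p q gam t, index_B v p q gam t / p).

(* Main.v *)
Require Import Defs.
From Stdlib Require Import Reals Lra.
From Coquelicot Require Import Coquelicot.
Open Scope R_scope.

Lemma sum_nonpos (a : nat -> R) : (forall k, a k <= 0) -> forall n, sum_n a n <= 0.
Proof.
  intros H n; induction n.
  - rewrite sum_O; apply H.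
  - rewrite sum_Sn. unfold plus; simpl. specialize (H (S n)). lra.
Qed.

Lemma pv_nonpos (g : nat -> R) gam t : 0 <= gam ->
  (forall k, g (t+k)%nat <= 0) -> forall pol, policy_value g gam t pol <= 0.
Proof.
  intros Hg H [N|]; simpl.
  - induction N; simpl; [lra|].
    assert (H1 := pow_le gam N Hg). assert (H2 := H N). nra.
  - unfold Series.
    assert (Hle : Rbar_le (Lim_seq (sum_n (fun k => gam ^ k * g (t + k)%nat))) 0).
    { rewrite <- (Lim_seq_const 0). apply Lim_seq_le_loc. exists O. intros n _.
      apply sum_nonpos. intros k. assert (H1 := pow_le gam k Hg). assert (H2 := H k). nra. }
    destruct (Lim_seq _); simpl in *; lra.
Qed.

Lemma ovp_iff v p q gam t W : 0 <= gam -> 0 <= v -> 0 < p ->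
  0 < Rmin 1 (p / q t) -> (forall k, Rmin 1 (p / q t) <= Rmin 1 (p / q (t+k)%nat)) ->
  (optimal_value_positive v p q gam t W <-> W < v * p / Rmin 1 (p / q t)).
Proof.
  intros Hg Hv Hp Hc Hmon. set (c := Rmin 1 (p / q t)) in *.
  unfold optimal_value_positive.
  destruct (Lub_Rbar_correct (fun x => exists pol, x = policy_value (gain v p W q) gam t pol)) as [Hub Hlub].
  split.
  - intros Hpos. destruct (Rlt_or_le W (v*p/c)) as [|Hge]; [assumption|exfalso].
    assert (HW : W * c >= v * p).
    { assert (v * p / c * c = v * p) by (field; lra). nra. }
    assert (HW0 : 0 <= W). { assert (0 <= v*p) by nra. nra. }
    assert (Hl : Rbar_le (Lub_Rbar (fun x => exists pol, x = policy_value (gain v p W q) gam t pol)) 0).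
    { apply Hlub. intros x [pol ->]. simpl. apply pv_nonpos; auto.
      intros k. unfold gain. specialize (Hmon k). nra. }
    destruct (Lub_Rbar _); simpl in *; lra.
  - intros HW.
    assert (Hg0 : 0 < gain v p W q t).
    { unfold gain. fold c. apply (Rmult_lt_compat_r c) in HW; [|lra].
      assert (v * p / c * c = v * p) by (field; lra). lra. }
    assert (He : gain v p W q t = policy_value (gain v p W q) gam t (Some 1%nat)).
    { simpl. rewrite Nat.add_0_r. lra. }
    assert (Hx := Hub (gain v p W q t) (ex_intro _ (Some 1%nat) He)).
    destruct (Lub_Rbar _); simpl in *; lra.
Qed.

Lemma lub_lt a : Lub_Rbar (fun W => W < a) = Finite a.
Proof.
  apply is_lub_Rbar_unique. split.
  - intros x Hx. simpl. lra.
  - intros b Hb. destruct b as [b| |]; simpl; auto.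
    + destruct (Rle_or_lt a b); auto. exfalso.
      specialize (Hb ((b+a)/2) ltac:(lra)). simpl in Hb. lra.
    + specialize (Hb (a-1) ltac:(lra)). simpl in Hb. auto.
Qed.

Lemma index_bid_key v p q gam t : 0 <= gam -> 0 <= v -> 0 < p ->
  0 < Rmin 1 (p / q t) -> (forall k, Rmin 1 (p / q t) <= Rmin 1 (p / q (t+k)%nat)) ->
  index_bid v p q gam t = (v * p, v).
Proof.
  intros Hg Hv Hp Hc Hmon.
  assert (HB : index_B v p q gam t = v * p).
  { unfold index_B, index_W.
    rewrite (Lub_Rbar_eqset _ (fun W => W < v * p / Rmin 1 (p / q t))).
    - rewrite lub_lt. simpl. field. lra.
    - intros W. apply ovp_iff; auto. }
  unfold index_bid. rewrite HB. f_equal. field. lra.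
Qed.

Lemma rmin1_ge p q : 0 < q -> q <= p -> Rmin 1 (p / q) = 1.
Proof.
  intros Hq Hqp. apply Rmin_left.
  set (x := p / q). assert (x * q = p) by (unfold x; field; lra). nra.
Qed.

Lemma rmin1_le p q : 0 < p -> 0 < q -> p <= q -> Rmin 1 (p / q) = p / q.
Proof.
  intros Hp Hq Hqp. apply Rmin_right.
  set (x := p / q). assert (x * q = p) by (unfold x; field; lra). nra.
Qed.

Lemma q_dec (q : nat -> R) : (forall t, q (S t) <= q t) -> forall t k, q (t + k)%nat <= q t.
Proof.
  intros H t k. induction k.
  - rewrite Nat.add_0_r; lra.
  - rewrite Nat.add_succ_r. specialize (H (t+k)%nat). lra.
Qed.

Theorem theorem6 :
  (* (1) n advertisers, each with q_{kt} <= p_k for all t, all using the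
     bidding index strategy *)
  (forall (n : nat) (v p : nat -> R) (q : nat -> nat -> R) (gam : R),
     0 <= gam < 1 ->
     (forall k, (k < n)%nat -> 0 < p k /\ 0 <= v k /\
        forall t, 0 < q k t /\ q k t <= p k) ->
     forall t : nat,
       (forall k, (k < n)%nat ->
          index_bid (v k) (p k) (q k) gam t = (v k * p k, v k) /\
          equivalent_bids (p k) (q k t) (v k * p k, v k) (v k * p k, 0)) /\
       (forall i, (i < n)%nat ->
          (forall k, (k < n)%nat ->
             eff_bid (q k t) (index_bid (v k) (p k) (q k) gam t)
             <= eff_bid (q i t) (index_bid (v i) (p i) (q i) gam t)) ->
          forall k, (k < n)%nat -> v k * p k <= v i * p i)) /\
  (* (2) q_{jt} >= p_j for all t, q_{jt} monotonically decreasing in t *)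
  (forall (v p : R) (q : nat -> R) (gam : R),
     0 <= gam < 1 -> 0 < p -> 0 <= v ->
     (forall t, 0 < q t /\ p <= q t) ->
     (forall t, q (S t) <= q t) ->
     forall t, index_bid v p q gam t = (v * p, v)).
Proof.
  split.
  - intros n v p q gam Hg Hk t.
    assert (Hbid : forall k, (k < n)%nat -> index_bid (v k) (p k) (q k) gam t = (v k * p k, v k)).
    { intros k Hkn. destruct (Hk k Hkn) as [Hp [Hv Hq]].
      apply index_bid_key; try lra.
      - rewrite rmin1_ge; [lra| apply Hq | apply Hq].
      - intros j. rewrite !rmin1_ge; try apply Hq. lra. }
    assert (Heff : forall k, (k < n)%nat ->
      eff_bid (q k t) (index_bid (v k) (p k) (q k) gam t) = v k * p k).
    { intros k Hkn. rewrite Hbid by auto. destruct (Hk k Hkn) as [Hp [Hv Hq]].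
      destruct (Hq t). unfold eff_bid; simpl. apply Rmax_left. nra. }
    split.
    + intros k Hkn. split; [auto|]. destruct (Hk k Hkn) as [Hp [Hv Hq]].
      destruct (Hq t) as [Hq0 Hqp].
      split.
      * unfold eff_bid; simpl. rewrite Rmax_left by nra. rewrite Rmax_left by nra. reflexivity.
      * intros Rm. unfold price_rule; simpl.
        destruct (Rlt_dec (v k * q k t) (v k * p k)) as [H1|H1];
        destruct (Rlt_dec (0 * q k t) (v k * p k)) as [H2|H2]; simpl; try reflexivity.
        -- exfalso. nra.
        -- assert (Hvq : v k = 0 \/ q k t = p k) by (destruct (Req_dec (q k t) (p k)); [auto| left; nra]).
           destruct Hvq as [Hv0|Hqe]; [exfalso; rewrite Hv0 in H2; lra|].
           rewrite Hqe. field. lra.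
    + intros i Hin Hmax k Hkn. specialize (Hmax k Hkn).
      rewrite (Heff k Hkn), (Heff i Hin) in Hmax. exact Hmax.
  - intros v p q gam Hg Hp Hv Hq Hdec t.
    apply index_bid_key; try lra.
    + rewrite rmin1_le; try apply Hq; auto. destruct (Hq t).
      unfold Rdiv. apply Rmult_lt_0_compat; [lra| apply Rinv_0_lt_compat; lra].
    + intros k. destruct (Hq t), (Hq (t+k)%nat).
      rewrite !rmin1_le; auto. unfold Rdiv. apply Rmult_le_compat_l; [lra|].
      apply Rinv_le_contravar; [lra|]. apply q_dec; auto.
Qed.
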